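(* (Working in $\mathbf{ZF}$.) Let $X$ be a weakly normal generalized topological space such that $X_{top}$ is locally compact and not compact, and let $\hat X$ be the Alexandroff strict compactification of $X$. Then the operator $\mathrm{Ex}_{\hat X}$ is finitely additive if and only if, for every pair $A,B$ of disjoint members of $\mathrm{Cl}_X$, at least one of the sets $A,B$ is topologically compact.
   Context: A generalized topological space (gts) $(X,\mathrm{Op}_X,\mathrm{Cov}_X)$ is in the sense of Delfs–Knebusch ($\mathrm{Op}_X$ contains $\emptyset,X$ and is closed under finite unions and intersections; $\mathrm{Cov}_X$ a collection of families of open sets satisfying the Delfs–Knebusch axioms). $\mathrm{Cl}_X$ = complements of open sets; $X_{top}$ = $X$ with topology generated by $\mathrm{Op}_X$; a subset is topologically compact if it is compact as a subspace of $X_{top}$. $X$ is weakly normal if any two disjoint sets, each a singleton or in $\mathrm{Cl}_X$, lie in disjoint open sets. $\mathrm{Kc}_X$ is the set of topologically compact members of $\mathrm{Cl}_X$. For $\infty\notin X$, the Alexandroff strict compactification is $\hat X=X\cup\{\infty\}$ with $\mathrm{Op}_{\hat X}=\mathrm{Op}_X\cup\{\hat X\setminus C:C\in\mathrm{Kc}_X\}$ and $\mathrm{Cov}_{\hat X}=\{\mathcal U\subseteq\mathrm{Op}_{\hat X}:\{U\cap X:U\in\mathcal U\}\in\mathrm{Cov}_X\}$; $\hat X_{top}$ is $\hat X$ with the topology generated by $\mathrm{Op}_{\hat X}$, a compactification of $X_{top}$. For $U\in\mathrm{Op}_X$, $\mathrm{Ex}_{\hat X}(U)=\hat X\setminus\mathrm{cl}_{\hat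 X_{top}}(X\setminus U)$; $\mathrm{Ex}_{\hat X}$ is finitely additive if $\{\mathrm{Ex}_{\hat X}(U):U\in\mathrm{Op}_X\}$ is stable under finite unions. *)

(* Defs.v *)
From mathcomp Require Import all_boot.
From mathcomp Require Import boolp classical_sets cardinality.

Set Implicit Arguments.
Unset Strict Implicit.
Unset Printing Implicit Defensive.

Local Open Scope classical_set_scope.

Section GTS.
Variable X : Type.

(** Delfs--Knebusch axioms (in the set-theoretic form used by Piekosz):
    Op_X contains set0, setT and is closed under binary unions/intersections;
    Cov_X is a family of families of open sets (a member U is an admissible
    covering of its union \bigcup U, which must be open) such that
    (1) finite families of open sets are admissible,
    (2) admissible coverings restrict to open subsets,
    (3) admissible coverings of the members of an admissible covering compose,
    (4) a family of open sets with the same union that is refined by an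
        admissible covering is admissible. *)
Definition is_gts (Op : set (set X)) (Cov : set (set (set X))) : Prop :=
  [/\ Op set0, Op setT,
      (forall U V, Op U -> Op V -> Op (U `|` V)),
      (forall U V, Op U -> Op V -> Op (U `&` V)) &
  [/\ (forall UU, Cov UU -> UU `<=` Op /\ Op (\bigcup_(U in UU) U)),
      (forall UU, UU `<=` Op -> finite_set UU -> Cov UU),
      (forall UU V, Cov UU -> Op V -> Cov [set U `&` V | U in UU]),
      (forall UU (VV : set X -> set (set X)), Cov UU ->
         (forall U, UU U -> Cov (VV U) /\ \bigcup_(W in VV U) W = U) ->
         Cov (\bigcup_(U in UU) VV U)) &
      (forall UU VV, Cov UU -> VV `<=` Op ->
         \bigcup_(V in VV) V = \bigcup_(U in UU) U ->
         (forall U, UU U -> exists2 V, VV V & U `<=` V) -> Cov VV)]].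

Definition gts_closed (Op : set (set X)) (C : set X) : Prop := Op (~` C).

End GTS.

Definition is_topology (T : Type) (F : set (set T)) : Prop :=
  [/\ F setT,
      (forall U V, F U -> F V -> F (U `&` V)) &
      (forall G : set (set T), G `<=` F -> F (\bigcup_(U in G) U))].

Definition gen_open (T : Type) (B : set (set T)) (W : set T) : Prop :=
  forall F : set (set T), is_topology F -> B `<=` F -> F W.

Definition top_compact (T : Type) (B : set (set T)) (A : set T) : Prop :=
  forall G : set (set T), G `<=` gen_open B -> A `<=` \bigcup_(U in G) U ->
    exists2 H : set (set T), finite_set H /\ H `<=` G & A `<=` \bigcup_(U in H) U.

Definition top_closure (T : Type) (B : set (set T)) (A : set T) : set T :=
  [set y | forall W, gen_open B W -> W y -> W `&` A !=set0].

Definition locally_compact (T : Type) (B : set (set T)) : Prop :=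
  forall x : T, exists2 K : set T, top_compact B K &
    exists2 U : set T, gen_open B U & U x /\ U `<=` K.

Definition singleton_or_closed (X : Type) (Op : set (set X)) (A : set X) :=
  (exists x, A = [set x]) \/ gts_closed Op A.

Definition weakly_normal (X : Type) (Op : set (set X)) : Prop :=
  forall A B : set X, singleton_or_closed Op A -> singleton_or_closed Op B ->
    A `&` B = set0 ->
    exists U V, [/\ Op U, Op V, A `<=` U, B `<=` V & U `&` V = set0].

Definition Kc (X : Type) (Op : set (set X)) (C : set X) : Prop :=
  gts_closed Op C /\ top_compact Op C.

(** The Alexandroff strict compactification: hat X = option X, with
    None playing the role of the point at infinity. *)
Definition hat_Op (X : Type) (Op : set (set X)) : set (set (option X)) :=
  [set W | (exists2 U, Op U & W = Some @` U) \/
           (exists2 C, Kc Op C & W = ~` (Some @` C))].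

Definition hat_Cov (X : Type) (Op : set (set X)) (Cov : set (set (set X)))
  : set (set (set (option X))) :=
  [set UU | UU `<=` hat_Op Op /\ Cov [set Some @^-1` U | U in UU]].

Definition Ex (X : Type) (Op : set (set X)) (U : set X) : set (option X) :=
  ~` top_closure (hat_Op Op) (Some @` (~` U)).

(** Ex_{hat X} is finitely additive: { Ex U | U in Op_X } is stable under
    (binary, hence finite nonempty) unions. *)
Definition Ex_finitely_additive (X : Type) (Op : set (set X)) : Prop :=
  forall U V, Op U -> Op V -> exists2 W, Op W & Ex Op U `|` Ex Op V = Ex Op W.

(* Main.v *)
Require Import Defs.
From mathcomp Require Import all_boot.
From mathcomp Require Import boolp classical_sets cardinality.
Local Open Scope classical_set_scope.

Lemma fin_union_closed (T : Type) (P : set (set T)) :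
  P set0 -> (forall A B, P A -> P B -> P (A `|` B)) ->
  forall H : set (set T), finite_set H -> H `<=` P -> P (\bigcup_(U in H) U).
Proof.
move=> P0 PU H /(@finite_seqP {classic (set T)}) [s ->].
elim: s => [|a s IH] HP.
  by have -> : \bigcup_(U in [set` ([::] : seq {classic (set T)})]) U = set0
    by apply/seteqP; split => x //= [U].
have -> : \bigcup_(U in [set` (a :: s : seq {classic (set T)})]) U =
   a `|` \bigcup_(U in [set` (s : seq {classic (set T)})]) U.
  apply/seteqP; split => x /=.
    move=> [U]; rewrite /= in_cons => /orP [/eqP -> | Us] Ux; first by left.
    by right; exists U.
  case=> [ax|[U Us Ux]]; first by exists a => //=; rewrite in_cons eqxx.
  by exists U => //=; rewrite in_cons Us orbT.
apply: PU; first by apply: HP; rewrite /= in_cons eqxx.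
by apply: IH => U Us; apply: HP; rewrite /= in_cons Us orbT.
Qed.

Lemma gen_open_B (T : Type) (B : set (set T)) U : B U -> gen_open B U.
Proof. by move=> BU F _; apply. Qed.

Lemma gen_open_basis (T : Type) (B : set (set T)) :
  B setT -> (forall U V, B U -> B V -> B (U `&` V)) ->
  forall W x, gen_open B W -> W x -> exists O, [/\ B O, O x & O `<=` W].
Proof.
move=> BT BI W x gW; move: x; apply: (gW [set W | forall x, W x -> exists O, [/\ B O, O x & O `<=` W]]).
- split.
  + by move=> x _; exists setT.
  + move=> U V hU hV x [Ux Vx].
    have [O1 [B1 O1x O1U]] := hU x Ux; have [O2 [B2 O2x O2V]] := hV x Vx.
    exists (O1 `&` O2); split => //; first exact: BI.
    by move=> y [? ?]; split; [apply: O1U | apply: O2V].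
  + move=> G GF x [U GU Ux]; have [O [BO Ox OU]] := GF U GU x Ux.
    by exists O; split => // y Oy; exists U => //; apply: OU.
- by move=> U BU x Ux; exists U; split.
Qed.

Lemma compact0 (T : Type) (B : set (set T)) : top_compact B set0.
Proof. by move=> G _ _; exists set0 => //; split. Qed.

Lemma compactU (T : Type) (B : set (set T)) K1 K2 :
  top_compact B K1 -> top_compact B K2 -> top_compact B (K1 `|` K2).
Proof.
move=> c1 c2 G GB cov.
have [H1 [f1 s1] cv1] := c1 G GB (fun x Kx => cov x (or_introl Kx)).
have [H2 [f2 s2] cv2] := c2 G GB (fun x Kx => cov x (or_intror Kx)).
exists (H1 `|` H2).
  by split; [rewrite finite_setU | by move=> U [/s1|/s2]].
move=> x [/cv1 [U HU Ux]|/cv2 [U HU Ux]]; exists U => //; [by left|by right].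
Qed.

Lemma compact_sub (T : Type) (B : set (set T)) K D :
  top_compact B K -> D `<=` K -> gen_open B (~` D) -> top_compact B D.
Proof.
move=> cK DK gD G GB cov.
have [H [fH sH] cvH] := cK (G `|` [set ~` D]) (fun U hU => match hU with
  | or_introl h => GB U h | or_intror h => eq_ind_r _ gD h end)
  (fun x Kx => match pselect (D x) with
   | left Dx => let: ex_intro2 U GU Ux := cov x Dx in ex_intro2 _ _ U (or_introl GU) Ux
   | right nDx => ex_intro2 _ _ (~` D) (or_intror erefl) nDx end).
exists (H `&` G); first by split; [exact: finite_setIl | by move=> U []].
move=> x Dx; have [U HU Ux] := cvH x (DK x Dx).
case: (sH U HU) => [GU|UD]; first by exists U.
by move: Ux; rewrite UD.
Qed.
Arguments gen_open_B {T B U}.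
Section S.
Variables (X : Type) (Op : set (set X)).
Hypotheses (Op0 : Op set0) (OpT : Op setT)
  (OpU : forall U V, Op U -> Op V -> Op (U `|` V))
  (OpI : forall U V, Op U -> Op V -> Op (U `&` V)).

Definition PP (U : set X) := exists2 C, Kc Op C & ~` U `<=` C.

Lemma Kc0 : Kc Op set0.
Proof. by split; [rewrite /gts_closed setC0 | exact: compact0]. Qed.

Lemma KcU C1 C2 : Kc Op C1 -> Kc Op C2 -> Kc Op (C1 `|` C2).
Proof.
move=> [h1 k1] [h2 k2]; split; last exact: compactU.
by rewrite /gts_closed setCU; apply: OpI.
Qed.

Lemma Ex_Some U x : Op U -> Ex Op U (Some x) <-> U x.
Proof.
move=> OU; split.
  move=> hE; have [//|nUx] := pselect (U x); exfalso; apply: hE => W _ Wx.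
  by exists (Some x); split => //; exists x.
move=> Ux hcl.
have [z [[u Uu <-] [v nv []]]] := hcl (Some @` U)
  (gen_open_B (or_introl (ex_intro2 _ _ U OU erefl))) (ex_intro2 _ _ x Ux erefl).
by move=> e; subst v.
Qed.

Lemma Ex_None U : Ex Op U None <-> PP U.
Proof.
split; last first.
  move=> [C KC UC] hcl.
  have [z [Wz [u nu zu]]] := hcl (~` (Some @` C))
    (gen_open_B (or_intror (ex_intro2 _ _ C KC erefl))) (ltac:(by move=> [])).
  by subst z; apply: Wz; exists u => //; apply: UC.
move=> hE.
have [W hW] : exists W, ~ (gen_open (hat_Op Op) W -> W None -> W `&` Some @` (~` U) !=set0).
  by apply/existsNP.
move/not_implyP: hW => [gW /not_implyP [WN hW]].
have [C KC CW] : exists2 C, Kc Op C & ~` (Some @` C) `<=` W.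
  move: WN; apply: (gW [set W | W None -> exists2 C, Kc Op C & ~` (Some @` C) `<=` W]).
  - split.
    + by move=> _; exists set0 => //; exact: Kc0.
    + move=> A B hA hB [AN BN]; have [C1 K1 s1] := hA AN; have [C2 K2 s2] := hB BN.
      exists (C1 `|` C2); first exact: KcU.
      move=> z nz; split; [apply: s1|apply: s2] => -[c Cc e]; apply: nz; exists c => //.
        by left. by right.
    + move=> G GF [A GA AN]; have [C KC s] := GF A GA AN.
      by exists C => // z /s Az; exists A.
  - move=> A [[V OV ->]|[C KC ->]].
      by move=> [].
    by move=> _; exists C.
exists C => // u nu; have [//|nCu] := pselect (C u); exfalso.
apply: hW; exists (Some u); split; last by exists u.
by apply: CW => -[c Cc [e]]; subst c.
Qed.

End S.

Lemma nbhd (X : Type) (Op : set (set X)) (Op0 : Op set0) (OpT : Op setT)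
  (OpU : forall U V, Op U -> Op V -> Op (U `|` V))
  (OpI : forall U V, Op U -> Op V -> Op (U `&` V))
  (hwn : weakly_normal Op) (hlc : locally_compact Op) C :
  Kc Op C -> exists O K, [/\ Op O, Kc Op K, C `<=` O & O `<=` K].
Proof.
move=> KC.
pose G := [set O | Op O /\ exists K, top_compact Op K /\ O `<=` K].
have cov : C `<=` \bigcup_(O in G) O.
  move=> x Cx; have [K cK [U gU [Ux UK]]] := hlc x.
  have [O [OO Ox OU]] := @gen_open_basis _ Op OpT OpI _ _ gU Ux.
  exists O => //; split => //; exists K; split => // y /OU; exact: UK.
have [H [fH sH] cvH] := KC.2 G (fun O h => gen_open_B h.1) cov.
have [OO0 [K0 [cK0 OK]]] : G (\bigcup_(U in H) U).
  apply: fin_union_closed => //.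
    by split => //; exists set0; split => //; exact: compact0.
  move=> A B [OA [KA [cA sA]]] [OB [KB [cB sB]]]; split; first exact: OpU.
  by exists (KA `|` KB); split; [exact: compactU | move=> y [/sA|/sB]; [left|right]].
set O0 := \bigcup_(U in H) U in OO0 OK cvH.
have cO0 : gts_closed Op (~` O0) by rewrite /gts_closed setCK.
have dj : C `&` ~` O0 = set0.
  by apply/seteqP; split => x // [Cx nx]; apply: nx; apply: cvH.
have [U [V [OU OV CU nV UV]]] := hwn C (~` O0) (or_intror KC.1) (or_intror cO0) dj.
exists U, (~` V); split => //.
- split; first by rewrite /gts_closed setCK.
  apply: compact_sub cK0 _ _; last by rewrite setCK; exact: gen_open_B.
  move=> x nVx; apply: OK; have [//|nx] := pselect (O0 x).
  by exfalso; apply: nVx; apply: nV.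
- by move=> x Ux Vx; have : (U `&` V) x by []; rewrite UV.
Qed.

Theorem proposition7p12 (X : Type) (Op : set (set X)) (Cov : set (set (set X)))
  (hgts : is_gts Op Cov) (hwn : weakly_normal Op)
  (hlc : locally_compact Op) (hnc : ~ top_compact Op setT) :
  Ex_finitely_additive Op <->
  (forall A B : set X, gts_closed Op A -> gts_closed Op B -> A `&` B = set0 ->
     top_compact Op A \/ top_compact Op B).
Proof.
case: hgts => Op0 OpT OpU OpI _.
have ES : forall U x, Op U -> Ex Op U (Some x) <-> U x := @Ex_Some X Op.
have EN := @Ex_None X Op OpT OpI.
split.
- move=> FA A B cA cB AB.
  have [W OW eqW] := FA _ _ cA cB.
  have nW : ~` W `<=` set0.
    move=> x nWx; apply: nWx; apply/(ES _ _ OW).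
    rewrite -eqW.
    have [Ax|nAx] := pselect (A x); last by left; apply/(ES _ _ cA).
    have [Bx|nBx] := pselect (B x); last by right; apply/(ES _ _ cB).
    by have : (A `&` B) x by []; rewrite AB.
  have : Ex Op W None by apply/(EN); exists set0 => //; exact: Kc0.
  rewrite -eqW => -[/(EN) [C KC sC]|/(EN) [C KC sC]];
    [left|right]; (apply: compact_sub KC.2 _ _; [by rewrite setCK in sC | exact: gen_open_B]).
- move=> hR U V OU OV; exists (U `|` V); first by apply: OpU.
  apply/seteqP; split => -[x|] /=.
  + by case=> [/(ES _ _ OU) h|/(ES _ _ OV) h]; apply/(ES _ _ (OpU _ _ OU OV)); [left|right].
  + case=> /(EN) [C KC s]; apply/(EN);
      exists C => // y; rewrite setCU => -[? ?]; exact: s.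
  + move/(ES _ _ (OpU _ _ OU OV)) => [Ux|Vx]; [left; apply/(ES _ _ OU)|right; apply/(ES _ _ OV)] => //.
  + move/(EN) => [C KC s].
    have [O [K [OO KK CO OK]]] := @nbhd X Op Op0 OpT OpU OpI hwn hlc C KC.
    have cl : forall Y, Op Y -> gts_closed Op (~` Y `&` ~` O).
      by move=> Y OY; rewrite /gts_closed setCI !setCK; apply: OpU.
    have dj : (~` U `&` ~` O) `&` (~` V `&` ~` O) = set0.
      apply/seteqP; split => x // [[nU nO] [nV _]]; apply: nO; apply: CO; apply: s.
      by case.
    have fin : forall Y, Op Y -> top_compact Op (~` Y `&` ~` O) ->
       Ex Op Y None.
      move=> Y OY cpt; apply/(EN).
      exists ((~` Y `&` ~` O) `|` K); first by apply: KcU => //; split => //; apply: cl.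
      move=> x nYx; have [Ox|nOx] := pselect (O x); [by right; apply: OK | by left].
    by case: (hR _ _ (cl _ OU) (cl _ OV) dj) => cpt; [left|right]; apply: fin.
Qed.
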